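(* Let $S$ be an intra-regular semigroup. Then Green's relation $\mathcal{J}$ equals the relation $\mathcal{I}$ on $S$.
   Context: A semigroup $S$ is intra-regular if $a\in Sa^{2}S$ for every $a\in S$. For $a\in S$, $I(a)=\{a\}\cup Sa\cup aS\cup SaS$ and $\mathrm{IN}(a)=\{a\}\cup\{a^{2}\}\cup SaS$. $a\,\mathcal{J}\,b$ iff $I(a)=I(b)$, and $a\,\mathcal{I}\,b$ iff $\mathrm{IN}(a)=\mathrm{IN}(b)$. *)

(* Defs.v *)
Definition associative {S : Type} (mul : S -> S -> S) : Prop :=
  forall x y z, mul x (mul y z) = mul (mul x y) z.

Definition intra_regular {S : Type} (mul : S -> S -> S) : Prop :=
  forall a : S, exists x y : S, a = mul (mul x (mul a a)) y.

Definition I_ideal {S : Type} (mul : S -> S -> S) (a : S) (z : S) : Prop :=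
  z = a
  \/ (exists s, z = mul s a)
  \/ (exists s, z = mul a s)
  \/ (exists s t, z = mul (mul s a) t).

Definition IN_ideal {S : Type} (mul : S -> S -> S) (a : S) (z : S) : Prop :=
  z = a
  \/ z = mul a a
  \/ (exists s t, z = mul (mul s a) t).

Definition J_rel {S : Type} (mul : S -> S -> S) (a b : S) : Prop :=
  forall z, I_ideal mul a z <-> I_ideal mul b z.

Definition I_rel {S : Type} (mul : S -> S -> S) (a b : S) : Prop :=
  forall z, IN_ideal mul a z <-> IN_ideal mul b z.

(* Main.v *)
Require Import Defs.
From Stdlib Require Import Setoid.

Lemma a_in_SaS (S : Type) (mul : S -> S -> S)
  (Hassoc : associative mul) (Hir : intra_regular mul) (a : S) :
  exists s t, a = mul (mul s a) t.
Proof.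
  destruct (Hir a) as [x [y H]].
  exists (mul x a), y. rewrite <- (Hassoc x a a). exact H.
Qed.

Lemma I_char (S : Type) (mul : S -> S -> S)
  (Hassoc : associative mul) (Hir : intra_regular mul) (a z : S) :
  I_ideal mul a z <-> exists s t, z = mul (mul s a) t.
Proof.
  destruct (a_in_SaS S mul Hassoc Hir a) as [u [v H]].
  split.
  - intros [E|[[s E]|[[s E]|E]]]; try rewrite E.
    + exists u, v; exact H.
    + exists (mul s u), v. rewrite H at 1. rewrite !Hassoc. reflexivity.
    + exists u, (mul v s). rewrite H at 1. rewrite !Hassoc. reflexivity.
    + exact E.
  - intros E. right; right; right; exact E.
Qed.

Lemma IN_char (S : Type) (mul : S -> S -> S)
  (Hassoc : associative mul) (Hir : intra_regular mul) (a z : S) :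
  IN_ideal mul a z <-> exists s t, z = mul (mul s a) t.
Proof.
  destruct (a_in_SaS S mul Hassoc Hir a) as [u [v H]].
  split.
  - intros [E|[E|E]]; try rewrite E.
    + exists u, v; exact H.
    + exists u, (mul v a). rewrite H at 1. rewrite !Hassoc. reflexivity.
    + exact E.
  - intros E. right; right; exact E.
Qed.

Theorem mainTheorem19 (S : Type) (mul : S -> S -> S)
  (Hassoc : associative mul) (Hir : intra_regular mul) :
  forall a b : S, J_rel mul a b <-> I_rel mul a b.
Proof.
  intros a b. unfold J_rel, I_rel. split; intros H z.
  - rewrite (IN_char S mul Hassoc Hir a z), (IN_char S mul Hassoc Hir b z),
      <- (I_char S mul Hassoc Hir a z), <- (I_char S mul Hassoc Hir b z). apply H.
  - rewrite (I_char S mul Hassoc Hir a z), (I_char S mul Hassoc Hir b z),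
      <- (IN_char S mul Hassoc Hir a z), <- (IN_char S mul Hassoc Hir b z). apply H.
Qed.
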